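(* Let $w$ be an infinite word with $\delta(w)<\gamma$, where $\gamma=(1+\sqrt5)/2$. Then $w$ is periodic.
   Context: Words are over an arbitrary alphabet; infinite words are right-infinite. The empty word counts as a palindromic prefix. If $w$ has infinitely many palindromic prefixes, let $(n_i)_{i\ge1}$ be the increasing sequence of their lengths ($n_1=0$) and $\delta(w)=\limsup n_{i+1}/n_i$; otherwise $\delta(w)=\infty$. *)

(* Defs.v *)
From Stdlib Require Import Reals Lra Lia.
From Coquelicot Require Import Coquelicot.
Open Scope R_scope.

Definition word (A : Type) := nat -> A.

Definition pal_prefix {A : Type} (w : word A) (m : nat) : Prop :=
  forall i : nat, (i < m)%nat -> w i = w (m - 1 - i)%nat.

(* n enumerates, in increasing order, all lengths of palindromic prefixes
   of w (0-indexed: n 0 = 0 is the paper's n_1). Existence of such an n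
   is equivalent to w having infinitely many palindromic prefixes. *)
Definition pal_prefix_enum {A : Type} (w : word A) (n : nat -> nat) : Prop :=
  n 0%nat = 0%nat /\
  (forall i : nat, (n i < n (S i))%nat) /\
  (forall m : nat, pal_prefix w m <-> exists i : nat, n i = m).

Definition delta_of (n : nat -> nat) : Rbar :=
  LimSup_seq (fun i => INR (n (S i)) / INR (n i)).

Definition golden_ratio : R := (1 + sqrt 5) / 2.

(* Periodic (purely periodic): w = u u u ... for some nonempty u. *)
Definition periodic {A : Type} (w : word A) : Prop :=
  exists p : nat, (0 < p)%nat /\ forall i : nat, w (i + p)%nat = w i.

(* Main.v *)
Require Import Defs.
From Stdlib Require Import Reals.
From Coquelicot Require Import Coquelicot.
From Stdlib Require Import Arith Lia Lra Psatz Classical.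

Definition per {A : Type} (w : word A) (p L : nat) : Prop :=
  forall k, (k + p < L)%nat -> w k = w (k + p)%nat.

Lemma per_mono {A} (w : word A) p L L' : per w p L -> (L' <= L)%nat -> per w p L'.
Proof. intros H HL k Hk; apply H; lia. Qed.

Lemma euclid_step {A} (w : word A) p q L :
  per w p L -> per w q L -> (p < q)%nat -> (p + q <= L)%nat -> per w (q - p) L.
Proof.
  intros Hp Hq Hlt HL k Hk.
  destruct (lt_dec (k + q) L) as [H|H].
  - rewrite (Hq k H). replace (k + q)%nat with (k + (q - p) + p)%nat by lia.
    symmetry; apply Hp; lia.
  - assert (E1 := Hp (k - p)%nat ltac:(lia)).
    assert (E2 := Hq (k - p)%nat ltac:(lia)).
    replace (k - p + p)%nat with k in E1 by lia.
    replace (k - p + q)%nat with (k + (q - p))%nat in E2 by lia.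
    congruence.
Qed.

Lemma fine_wilf {A} (w : word A) : forall s p q L, (p + q = s)%nat ->
  per w p L -> per w q L -> (p + q <= L)%nat -> per w (Nat.gcd p q) L.
Proof.
  intro s; induction s as [s IH] using (well_founded_induction lt_wf).
  intros p q L Hs Hp Hq HL.
  destruct (Nat.eq_dec p 0) as [->|Hp0]. { simpl; auto. }
  destruct (Nat.eq_dec q 0) as [->|Hq0]. { rewrite Nat.gcd_0_r; auto. }
  destruct (lt_eq_lt_dec p q) as [[H|H]|H].
  - rewrite <- Nat.gcd_sub_diag_r by lia.
    apply (IH q) with (L := L); try lia; auto.
    apply euclid_step; auto; lia.
  - subst; rewrite Nat.gcd_diag; auto.
  - rewrite Nat.gcd_comm, <- Nat.gcd_sub_diag_r by lia. rewrite Nat.gcd_comm.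
    apply (IH p) with (L := L); try lia; auto.
    apply euclid_step; auto; lia.
Qed.

Lemma extend {A} (w : word A) q g L M :
  per w q M -> per w g L -> Nat.divide g q -> (0 < q)%nat ->
  (q + g <= L)%nat -> (L <= M)%nat -> per w g M.
Proof.
  intros Hq Hg _ Hq0 HL HM k.
  induction k as [k IH] using (well_founded_induction lt_wf).
  intros Hk.
  destruct (lt_dec (k + g) L) as [H|H]. { apply Hg; auto. }
  assert (E1 := Hq (k - q)%nat ltac:(lia)).
  assert (E2 := Hq (k - q + g)%nat ltac:(lia)).
  assert (E3 := IH (k - q)%nat ltac:(lia) ltac:(lia)).
  replace (k - q + q)%nat with k in E1 by lia.
  replace (k - q + g + q)%nat with (k + g)%nat in E2 by lia.
  congruence.
Qed.

Lemma pal_per {A} (w : word A) a b :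
  pal_prefix w a -> pal_prefix w b -> (a <= b)%nat -> per w (b - a) b.
Proof.
  intros Ha Hb Hab k Hk.
  rewrite (Hb (k + (b - a))%nat Hk).
  replace (b - 1 - (k + (b - a)))%nat with (a - 1 - k)%nat by lia.
  apply Ha; lia.
Qed.

Lemma min_exists (f : nat -> nat) : forall m, (exists i, (f i <= m)%nat) ->
  exists j, forall i, (f j <= f i)%nat.
Proof.
  induction m as [|m IH]; intros [i Hi].
  - exists i; intros; lia.
  - destruct (classic (exists i', (f i' <= m)%nat)) as [H|H]; auto.
    exists i; intros i'. destruct (le_lt_dec (f i') m) as [H'|H'].
    + exfalso; eauto.
    + lia.
Qed.

Lemma golden_facts : 1 < golden_ratio /\ golden_ratio * golden_ratio = golden_ratio + 1.
Proof.
  unfold golden_ratio.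
  assert (H5 := sqrt_sqrt 5 ltac:(lra)).
  assert (Hs : 2 < sqrt 5).
  { rewrite <- sqrt_square with 2 by lra. apply sqrt_lt_1; lra. }
  split; nra.
Qed.

Lemma eventually_lt (u : nat -> R) (c : R) :
  Rbar_lt (LimSup_seq u) (Finite c) -> exists N, forall i, (N <= i)%nat -> u i < c.
Proof.
  destruct (ex_LimSup_seq u) as [l Hl].
  rewrite (is_LimSup_seq_unique _ _ Hl).
  destruct l as [l| |]; simpl in *; intros Hlt.
  - assert (Hp : 0 < c - l) by lra.
    destruct (Hl (mkposreal _ Hp)) as [_ [N HN]].
    exists N; intros i Hi; specialize (HN i Hi); simpl in HN; lra.
  - contradiction.
  - destruct (Hl c) as [N HN]; eauto.
Qed.

Theorem corollary1p5 (A : Type) (w : word A) (n : nat -> nat) :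
  pal_prefix_enum w n ->
  Rbar_lt (delta_of n) (Finite golden_ratio) ->
  periodic w.
Proof.
  intros [H0 [Hinc Hpal]] Hd.
  Local Open Scope nat_scope.
  destruct golden_facts as [G1 G2].
  destruct (eventually_lt _ _ Hd) as [N0 HN0].
  assert (Hge : forall i, (i <= n i)%nat).
  { induction i; [lia|]. pose proof (Hinc i); lia. }
  assert (Hpos : forall i, (1 <= i)%nat -> (0 < n i)%nat).
  { intros i Hi; specialize (Hge i); lia. }
  set (N := S N0).
  assert (Hrat : forall i, (N <= i)%nat -> (INR (n (S i)) < golden_ratio * INR (n i))%R).
  { intros i Hi. specialize (HN0 i ltac:(unfold N in *; lia)).
    assert (0 < INR (n i))%R by (apply lt_0_INR; apply Hpos; unfold N in *; lia).
    apply Rmult_lt_reg_r with (/ INR (n i)). apply Rinv_0_lt_compat; auto.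
    rewrite Rmult_assoc, Rinv_r by lra. rewrite Rmult_1_r. exact HN0. }
  assert (Hfib : forall i, (N <= i)%nat -> (n (S (S i)) <= n (S i) + n i)%nat).
  { intros i Hi.
    assert (R1 := Hrat i Hi). assert (R2 := Hrat (S i) ltac:(lia)).
    assert (0 < INR (n i))%R by (apply lt_0_INR; apply Hpos; unfold N in *; lia).
    assert (INR (n (S (S i))) < INR (n (S i) + n i))%R.
    { rewrite plus_INR. nra. }
    apply INR_lt in H1. lia. }
  assert (HP : forall i, pal_prefix w (n i)) by (intro i; apply Hpal; eauto).
  set (d := fun i => (n (S i) - n i)%nat).
  assert (Hd0 : forall i, (0 < d i)%nat) by (intro i; unfold d; pose proof (Hinc i); lia).
  assert (Hdp : forall i, per w (d i) (n (S i))).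
  { intro i; apply pal_per; auto. pose proof (Hinc i); lia. }
  set (g := fix g j := match j with
                       | O => d N
                       | S j' => Nat.gcd (g j') (d (N + S j')%nat)
                       end).
  assert (Hinv : forall j, (0 < g j)%nat /\ (g j <= d (N + j))%nat /\
                           per w (g j) (n (S (N + j))) /\ (g (S j) <= g j)%nat).
  { induction j as [|j [IH1 [IH2 [IH3 IH4]]]].
    - simpl g. rewrite Nat.add_0_r. assert (Hdv := Nat.gcd_divide_l (d N) (d (N + 1)%nat)).
      repeat split; auto.
      apply Nat.divide_pos_le; auto.
    - assert (Hg : g (S j) = Nat.gcd (g j) (d (N + S j)%nat)) by reflexivity.
      assert (Hdl := Nat.gcd_divide_l (g j) (d (N + S j)%nat)).
      assert (Hdr := Nat.gcd_divide_r (g j) (d (N + S j)%nat)).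
      assert (Hgp : (0 < g (S j))%nat).
      { rewrite Hg. destruct (Nat.eq_dec (Nat.gcd (g j) (d (N + S j)%nat)) 0) as [E|E].
        - apply Nat.gcd_eq_0_l in E; lia.
        - lia. }
      assert (Hle : (g (S j) <= d (N + S j))%nat) by (rewrite Hg; apply Nat.divide_pos_le; auto).
      assert (Hfb := Hfib (N + j)%nat ltac:(lia)).
      replace (S (S (N + j))) with (S (N + S j)) in Hfb by lia.
      replace (S (N + j)) with (N + S j)%nat in Hfb, IH3 by lia.
      assert (Hsum : (d (N + j) + d (N + S j) <= n (N + S j))%nat).
      { unfold d. pose proof (Hinc (N + j)%nat) as Hi1; pose proof (Hinc (N + S j)%nat) as Hi2.
        replace (S (N + j)) with (N + S j)%nat in * by lia. lia. }
      assert (Hper : per w (g (S j)) (n (S (N + S j)))).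
      { apply extend with (q := d (N + S j)) (L := n (N + S j)); auto.
        - rewrite Hg. apply fine_wilf with (s := (g j + d (N + S j))%nat); auto.
          + apply per_mono with (n (S (N + S j))); auto. pose proof (Hinc (N + S j)%nat); lia.
          + lia.
        - rewrite Hg in *. assert (Nat.gcd (g j) (d (N + S j)) <= g j)%nat
            by (apply Nat.divide_pos_le; auto). lia.
        - pose proof (Hinc (N + S j)%nat); lia. }
      repeat split; auto.
      change (g (S (S j))) with (Nat.gcd (g (S j)) (d (N + S (S j))%nat)).
      apply Nat.divide_pos_le; auto. apply Nat.gcd_divide_l. }
  destruct (min_exists g (g 0%nat) ltac:(exists 0%nat; lia)) as [j0 Hj0].
  assert (Hconst : forall j, (j0 <= j)%nat -> g j = g j0).
  { intros j Hj. induction Hj; auto.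
    assert (Hx := proj2 (proj2 (proj2 (Hinv m)))). specialize (Hj0 (S m)). lia. }
  exists (g j0). split; [apply (Hinv j0)|].
  intro k.
  set (j := (j0 + k + g j0)%nat).
  assert (Hj := proj1 (proj2 (proj2 (Hinv j)))).
  rewrite (Hconst j ltac:(unfold j; lia)) in Hj.
  symmetry. apply Hj. specialize (Hge (S (N + j))). unfold j in *. lia.
Qed.
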